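(* Let $K$ and $K'$ be fields with $K'$ a subfield of $K$. If $K$ has a multiplicative basis as a $K'$-vector space, then $K'=K$.
   Context: A $K'$-linear basis $B$ of a $K'$-algebra $R$ is multiplicative if for all $b,b'\in B$ either $bb'=0$ or $bb'\in B$. *)

(* Defs.v *)
From HB Require Import structures.
From mathcomp Require Import all_boot all_order all_algebra.
Set Implicit Arguments. Unset Strict Implicit. Unset Printing Implicit Defensive.
Import GRing.Theory.
Local Open Scope ring_scope.

(* K' is represented as a subfield S of the field K: a predicate closed under
   the field operations (mathcomp's [divring_closed]: contains 1, closed under
   subtraction, multiplication and division). *)

Definition lin_indep_over (K : fieldType) (S : {pred K}) (B : K -> Prop) : Prop :=
  forall (s : seq K) (c : K -> K),
    uniq s -> (forall x, x \in s -> B x) -> (forall x, x \in s -> c x \in S) ->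
    \sum_(x <- s) c x * x = 0 -> forall x, x \in s -> c x = 0.

Definition spans_over (K : fieldType) (S : {pred K}) (B : K -> Prop) : Prop :=
  forall y : K, exists (s : seq K) (c : K -> K),
    [/\ uniq s, (forall x, x \in s -> B x), (forall x, x \in s -> c x \in S)
      & y = \sum_(x <- s) c x * x].

Definition basis_over (K : fieldType) (S : {pred K}) (B : K -> Prop) : Prop :=
  lin_indep_over S B /\ spans_over S B.

Definition multiplicative (K : fieldType) (B : K -> Prop) : Prop :=
  forall b b', B b -> B b' -> b * b' = 0 \/ B (b * b').

(* Main.v *)
Require Import Defs.
From mathcomp Require Import all_boot all_order all_algebra.
From mathcomp Require Import ring.
Local Open Scope ring_scope.
Section Aux.
Import GRing.Theory.

Lemma part_sum (K : fieldType) (p : seq (K * K)) (t : seq K) (f : K * K -> K) :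
  uniq t -> (forall q, q \in p -> q.2 \in t) ->
  \sum_(q <- p) f q = \sum_(y <- t) \sum_(q <- p | q.2 == y) f q.
Proof.
move=> ut; elim: p => [|a p IH] H.
  by rewrite big_nil big1 // => y _; rewrite big_nil.
rewrite big_cons IH; last by move=> q qp; apply: H; rewrite inE qp orbT.
have at2 : a.2 \in t by apply: H; rewrite inE eqxx.
rewrite [RHS](eq_bigr (fun y => (if a.2 == y then f a else 0) + \sum_(q <- p | q.2 == y) f q)); last first.
  by move=> y _; rewrite big_cons; case: ifP => _ //; rewrite add0r.
rewrite big_split /=; congr (_ + _).
rewrite -big_mkcond /= -big_filter.
rewrite (_ : [seq i <- t | a.2 == i] = [:: a.2]) ?big_seq1 //.
rewrite -(filter_pred1_uniq ut at2); apply: eq_filter => y /=; by rewrite eq_sym.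
Qed.

Lemma main_aux (K : fieldType) (S : {pred K}) (B : K -> Prop) :
  divring_closed S ->
  basis_over S B -> Defs.multiplicative B ->
  forall x : K, x \in S.
Proof.
move=> [S1 SB SDv] [Hind Hsp] Hmul.
have S0 : 0 \in S by rewrite -(subrr 1); apply: SB.
have SN : forall u, u \in S -> - u \in S by move=> u uS; rewrite -sub0r; apply: SB.
have SD : forall u v, u \in S -> v \in S -> u + v \in S.
  by move=> u v uS vS; rewrite -(opprK v); apply: SB => //; apply: SN.
have Ssum : forall (I : eqType) (r : seq I) (F : I -> K),
    (forall i, i \in r -> F i \in S) -> \sum_(i <- r) F i \in S.
  move=> I r F; elim: r => [|a r IH] HF; first by rewrite big_nil.
  rewrite big_cons; apply: SD; first by apply: HF; rewrite inE eqxx.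
  by apply: IH => i ir; apply: HF; rewrite inE ir orbT.
have Aug : forall p : seq (K * K), (forall q, q \in p -> q.1 \in S /\ B q.2) ->
    \sum_(q <- p) q.1 * q.2 = 0 -> \sum_(q <- p) q.1 = 0.
  move=> p Hp H0.
  set t := undup (map snd p).
  have ut : uniq t by apply: undup_uniq.
  have pt : forall q, q \in p -> q.2 \in t.
    by move=> q qp; rewrite mem_undup; apply: map_f.
  have Hc := Hind t (fun y => \sum_(q <- p | q.2 == y) q.1) ut.
  rewrite (@part_sum K p t (fun q => q.1) ut pt) big1_seq // => y /andP [_ yt]; apply: Hc => //.
  - move=> z; rewrite mem_undup => /mapP [q qp ->]; exact: (Hp q qp).2.
  - move=> z _; rewrite big_mkcond /=; apply: Ssum => q qp.
    by case: ifP => _ //; exact: (Hp q qp).1.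
  rewrite -[RHS]H0 (@part_sum K p t (fun q => q.1 * q.2) ut pt).
  by apply: eq_bigr => z _; rewrite mulr_suml; apply: eq_bigr => q /eqP ->.
have B0 : forall b, B b -> b != 0.
  move=> b Bb; apply/eqP => b0.
  have H1 : (1 : K) = 0.
    have := Aug [:: (1, b)]; rewrite !big_seq1 /= b0 mulr0; apply => //.
    by move=> q; rewrite inE => /eqP -> /=; split=> //; rewrite -b0.
  by have := @oner_neq0 K; rewrite H1 eqxx.
have Bmul : forall b x, B b -> B x -> B (b * x).
  move=> b x Bb Bx; case: (Hmul b x Bb Bx) => // /eqP.
  by rewrite mulf_eq0 (negbTE (B0 b Bb)) (negbTE (B0 x Bx)).
have B1 : forall b, B b -> b = 1.
  move=> b Bb; case: (b =P 1) => // /eqP nb1; exfalso.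
  have nb1' : 1 - b != 0 by rewrite subr_eq0 eq_sym.
  have [s [d [us sB sS E1]]] := Hsp 1.
  have [s' [e [us' sB' sS' E2]]] := Hsp (1 - b)^-1.
  have A1 := Aug ((-1, b) :: map (fun x => (d x, b * x)) s).
  rewrite big_cons big_map big_cons big_map /= in A1.
  have D1 : \sum_(x <- s) d x = 1.
    apply/eqP; rewrite -subr_eq0 addrC; apply/eqP; apply: A1.
      move=> q; rewrite inE => /orP [/eqP -> /=|/mapP [x xs ->] /=].
        by split=> //; apply: SN.
      by split; [apply: sS | apply: Bmul => //; apply: sB].
    rewrite (eq_bigr (fun x => b * (d x * x))); last by move=> x _; rewrite mulrCA.
    by rewrite -mulr_sumr -E1 mulr1 mulN1r addNr.
  have A2 := Aug (map (fun x => (d x, x)) s ++ map (fun x => (- e x, x)) s'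
                   ++ map (fun x => (e x, b * x)) s').
  rewrite !big_cat !big_map /= in A2.
  have : \sum_(x <- s) d x = 0.
    suff Z : \sum_(x <- s) d x + (\sum_(x <- s') - e x + \sum_(x <- s') e x) = 0.
      by rewrite sumrN addNr addr0 in Z.
    apply: A2.
      move=> q; rewrite !mem_cat => /or3P [] /mapP [x xs ->] /=.
      - by split; [apply: sS | apply: sB].
      - by split; [apply: SN; apply: sS' | apply: sB'].
      - by split; [apply: sS' | apply: Bmul => //; apply: sB'].
    rewrite -E1 -big_split /=.
    rewrite (eq_bigr (fun j => e j * j * (b - 1))); last first.
      by move=> j _; ring.
    by rewrite -mulr_suml -E2 -[b - 1]opprB mulrN mulVf // subrr.
  rewrite D1 => /eqP; rewrite oner_eq0 //.
move=> x; have [s [c [us sB sS E]]] := Hsp x; rewrite E.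
apply: Ssum => y ys; have := sS y ys; by rewrite (B1 y (sB y ys)) mulr1.
Qed.
End Aux.

Theorem lemma5p3 (K : fieldType) (S : {pred K}) (B : K -> Prop) :
  divring_closed S ->
  basis_over S B -> multiplicative B ->
  forall x : K, x \in S.
Proof. exact: main_aux. Qed.
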